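(* Let $G$ be a connected graph that is not complete. Then $\dim_{n\ell}(G)=1$ if and only if there exists a vertex $x\in V(G)$ such that for every integer $k$ with $0\le k\le \mathrm{diam}(G)$ the distance level $L_k(x)=\{u\in V(G): d_G(x,u)=k\}$ induces a complete subgraph of $G$.
   Context: Graphs are finite, simple and connected; $d_G(u,v)$ is the shortest-path distance and $\mathrm{diam}(G)$ the largest distance in $G$. A set $X\subseteq V(G)$ resolves two vertices $u,v$ if some $x\in X$ satisfies $d_G(u,x)\neq d_G(v,x)$. $X$ is a resolving set if it resolves every pair of distinct vertices; the metric dimension $\dim(G)$ is the minimum size of a resolving set. $X$ is a nonlocal resolving set if it resolves every pair of distinct non-adjacent vertices; the nonlocal metric dimension $\dim_{n\ell}(G)$ is the minimum size of a nonlocal resolving set (so $\dim_{n\ell}(K_n)=0$), and a nonlocal metric basis is a nonlocal resolving set of this minimum size. *)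

(* Defs.v *)
From mathcomp Require Import all_boot.
Set Implicit Arguments. Unset Strict Implicit. Unset Printing Implicit Defensive.

Definition simple_graph (T : finType) (e : rel T) : Prop :=
  symmetric e /\ irreflexive e.

Definition connected_graph (T : finType) (e : rel T) : Prop :=
  forall x y : T, connect e x y.

Fixpoint within (T : finType) (e : rel T) (n : nat) (x y : T) : bool :=
  match n with
  | 0 => x == y
  | n'.+1 => (x == y) || [exists z, e x z && within e n' z y]
  end.

(* Shortest-path distance: the least n with a walk of length <= n.
   In a connected graph on #|T| vertices it is < #|T|, so the search
   range iota 0 #|T| suffices. *)
Definition dist (T : finType) (e : rel T) (x y : T) : nat :=
  find (fun n => within e n x y) (iota 0 #|T|).

Definition diam (T : finType) (e : rel T) : nat :=
  \max_(x : T) \max_(y : T) dist e x y.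

Definition level (T : finType) (e : rel T) (x : T) (k : nat) : {set T} :=
  [set u | dist e x u == k].

Definition is_clique (T : finType) (e : rel T) (S : {set T}) : Prop :=
  forall u v, u \in S -> v \in S -> u != v -> e u v.

Definition complete_graph (T : finType) (e : rel T) : Prop :=
  forall u v : T, u != v -> e u v.

Definition nonlocal_resolving (T : finType) (e : rel T) (X : {set T}) : bool :=
  [forall u, forall v, ((u != v) && ~~ e u v) ==>
     [exists x in X, dist e u x != dist e v x]].

(* Nonlocal metric dimension: minimum size of a nonlocal resolving set
   ([set: T] is always one). *)
Definition dim_nl (T : finType) (e : rel T) : nat :=
  #|[arg min_(X < [set: T] | nonlocal_resolving e X) #|X|]|.

(* Main.v *)
Require Import Defs.
From mathcomp Require Import all_boot.
Set Implicit Arguments.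
Unset Strict Implicit.

Lemma within_refl (T : finType) (e : rel T) n x : within e n x x.
Proof. by case: n => [|n] /=; rewrite eqxx. Qed.

Lemma within_snoc (T : finType) (e : rel T) n x z y :
  within e n x z -> e z y -> within e n.+1 x y.
Proof.
elim: n x => [|n IH] x /=.
  move/eqP=> -> ezy; apply/orP; right; apply/existsP; exists y.
  by rewrite ezy eqxx.
case/orP=> [/eqP -> ezy|/existsP [w /andP [exw hw]] ezy].
  apply/orP; right; apply/existsP; exists y; by rewrite ezy /= eqxx.
apply/orP; right; apply/existsP; exists w; rewrite exw /=.
exact: (IH w hw ezy).
Qed.

Lemma within_sym (T : finType) (e : rel T) n x y :
  symmetric e -> within e n x y -> within e n y x.
Proof.
move=> se; elim: n x y => [|n IH] x y; first by rewrite /= eq_sym.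
rewrite [within _ n.+1 x y]/= => /orP [/eqP ->|/existsP [z /andP [exz hz]]]; first exact: within_refl.
apply: (@within_snoc T e n y z x (IH _ _ hz)); by rewrite se.
Qed.

Lemma dist_sym (T : finType) (e : rel T) x y :
  symmetric e -> dist e x y = dist e y x.
Proof.
move=> se; rewrite /dist; apply: eq_find => n.
by apply/idP/idP; apply: within_sym.
Qed.

Lemma dist_neq0 (T : finType) (e : rel T) x y : x != y -> dist e x y != 0.
Proof.
move=> nxy; rewrite /dist.
have : 0 < #|T| by apply/card_gt0P; exists x.
case: #|T| => [|n] //= _; by rewrite (negbTE nxy).
Qed.

Lemma setT_res (T : finType) (e : rel T) : nonlocal_resolving e [set: T].
Proof.
apply/forallP=> u; apply/forallP=> v; apply/implyP=> /andP [nuv _].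
apply/existsP; exists v; rewrite in_setT /=.
rewrite [dist e v v]/dist.
have : 0 < #|T| by apply/card_gt0P; exists v.
case E: #|T| => [|n] //= _; rewrite eqxx.
by have := dist_neq0 e nuv.
Qed.

Theorem proposition2p1 (T : finType) (e : rel T) :
  simple_graph e -> connected_graph e -> ~ complete_graph e ->
  (dim_nl e = 1 <->
   exists x : T, forall k : nat, k <= diam e -> is_clique e (level e x k)).
Proof.
move=> [se ie] _ nc.
rewrite /dim_nl.
case: arg_minnP; first exact: setT_res.
move=> X resX minX; split.
  move/eqP/cards1P=> [x hX]; exists x => k _ u v.
  rewrite !inE => /eqP hu /eqP hv nuv.
  apply/negPn/negP=> neuv.
  move/forallP: resX => /(_ u) /forallP /(_ v).
  rewrite nuv neuv /= => /existsP [y]; rewrite hX inE => /andP [/eqP -> ].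
  by rewrite (dist_sym u) // (dist_sym v) // hu hv eqxx.
move=> [x hx].
have resx : nonlocal_resolving e [set x].
  apply/forallP=> u; apply/forallP=> v; apply/implyP=> /andP [nuv neuv].
  apply/existsP; exists x; rewrite inE eqxx /=.
  apply/negP=> /eqP duv.
  have hk : dist e x u <= diam e.
    rewrite /diam; apply: leq_trans (leq_bigmax x).
    exact: (leq_bigmax (F := fun y => dist e x y) u).
  have := hx _ hk u v; rewrite !inE eqxx.
  rewrite (dist_sym x v) // -duv (dist_sym u) // eqxx => /(_ isT isT nuv).
  by rewrite (negbTE neuv).
have := minX _ resx; rewrite cards1 => le1.
apply/eqP; rewrite eqn_leq le1 /= card_gt0; apply/negP=> /eqP X0.
apply: nc => u v nuv; apply/negPn/negP=> neuv.
move/forallP: resX => /(_ u) /forallP /(_ v).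
by rewrite nuv neuv /= X0 => /existsP [y]; rewrite inE.
Qed.
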